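(* Let $(X,T)$ be a Cantor minimal system and let $E(X,T)=\{\theta\in\mathbb R:\exp(2\pi i\theta)\text{ is a continuous eigenvalue of }T\}$. For $\theta\in[0,1)\cap E(X,T)$ let $U_\theta$ be a clopen subset of $X$ such that $1_{U_\theta}-\theta\mathbf 1$ is a real coboundary (such a set exists, with $U_0=\emptyset$). For $\theta\in E(X,T)$ define $\Theta(\theta)=\lfloor\theta\rfloor[1_X]+[1_{U_{\{\theta\}}}]\in K^0(X,T)$, where $\{\theta\}=\theta-\lfloor\theta\rfloor$. Then $\Theta$ is well defined (independent of the choice of the sets $U_{\{\theta\}}$) and $\Theta:E(X,T)\to K^0(X,T)$ is an injective group homomorphism.
   Context: A Cantor minimal system is a homeomorphism $T$ of a Cantor set $X$ with all orbits dense. A continuous eigenvalue is $\lambda\in\mathbb C$ with $f\circ T=\lambda f$ for some continuous $f:X\to\mathbb S^1$. A real coboundary is a function of the form $F-F\circ T$ with $F\in C(X,\mathbb R)$. $K^0(X,T)=C(X,\mathbb Z)/\{f-f\circ T:f\in C(X,\mathbb Z)\}$ and $[f]$ denotes the class of $f$. *)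

(* Defs.v *)
From HB Require Import structures.
From mathcomp Require Import all_boot all_order all_algebra.
From mathcomp Require Import all_classical all_reals all_analysis.
Set Implicit Arguments. Unset Strict Implicit. Unset Printing Implicit Defensive.
Import Order.TTheory GRing.Theory Num.Theory.
Import numFieldTopology.Exports numFieldNormedType.Exports.
Local Open Scope classical_set_scope.
Local Open Scope ring_scope.

Definition homeomorphism (X : topologicalType) (T : X -> X) : Prop :=
  exists Tinv : X -> X,
    [/\ cancel T Tinv, cancel Tinv T, continuous T & continuous Tinv].

Definition orbit (X : Type) (T : X -> X) (x : X) : set X :=
  [set y | exists n : nat, y = iter n T x \/ x = iter n T y].

Definition cantor_minimal (R : realType) (X : pseudoPMetricType R)
  (T : X -> X) : Prop :=
  [/\ cantor_like X, homeomorphism T &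
      forall x : X, closure (orbit T x) = [set: X]].

(* exp(2 pi i theta) is a continuous eigenvalue of T: there is a continuous
   f = fr + i fi : X -> S^1 with f (T x) = exp(2 pi i theta) f x
   (complex multiplication written out in real and imaginary parts). *)
Definition E_set (R : realType) (X : pseudoPMetricType R) (T : X -> X)
  : set R :=
  [set theta : R | exists fr fi : X -> R,
     [/\ continuous (fr : X -> R), continuous (fi : X -> R),
         (forall x, fr x ^+ 2 + fi x ^+ 2 = 1) &
         (forall x,
            fr (T x) = cos (2 * pi * theta) * fr x - sin (2 * pi * theta) * fi x
         /\ fi (T x) = sin (2 * pi * theta) * fr x + cos (2 * pi * theta) * fi x)]].

Definition real_coboundary (R : realType) (X : pseudoPMetricType R)
  (T : X -> X) (g : X -> R) : Prop :=
  exists F : X -> R, continuous (F : X -> R) /\ forall x, g x = F x - F (T x).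

(* h in C(X,Z) : continuous for the (discrete) topology of Z, seen inside R *)
Definition cont_int (R : realType) (X : pseudoPMetricType R) (h : X -> int)
  : Prop := continuous ((fun x => (h x)%:~R) : X -> R).

(* [f] = [g] in K^0(X,T) = C(X,Z) / {h - h o T : h in C(X,Z)} *)
Definition K0_eq (R : realType) (X : pseudoPMetricType R) (T : X -> X)
  (f g : X -> int) : Prop :=
  exists h : X -> int, cont_int h /\ forall x, f x - g x = h x - h (T x).

Definition admissible (R : realType) (X : pseudoPMetricType R) (T : X -> X)
  (theta : R) (U : set X) : Prop :=
  clopen U /\ real_coboundary T (fun x => (\1_U x : R) - theta).

Definition fracpart (R : realType) (theta : R) : R :=
  theta - (Num.floor theta)%:~R.

(* representative in C(X,Z) of Theta(theta) = floor(theta)[1_X] + [1_U],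
   U an admissible choice of U_{fracpart theta} *)
Definition Theta_rep (R : realType) (X : pseudoPMetricType R)
  (theta : R) (U : set X) : X -> int :=
  fun x => Num.floor theta + (\1_U x : int).

(* Main.v *)
Require Import Defs.
From HB Require Import structures.
From mathcomp Require Import all_boot all_order all_algebra.
From mathcomp Require Import all_classical all_reals all_analysis.
From mathcomp Require Import ring lra zify.
Import Order.TTheory GRing.Theory Num.Theory.
Import numFieldTopology.Exports numFieldNormedType.Exports.
Local Open Scope classical_set_scope.
Local Open Scope ring_scope.
Section S.
Variable R : realType.
Lemma cs_nat (n : nat) : cos (2 * pi * n%:R) = 1 :> R /\ sin (2 * pi * n%:R) = 0 :> R.
Proof.
have E : 2 * pi * n%:R = pi *+ 2 *+ n :> R by rewrite mulr_natr mulr_natl.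
have := periodicn (@cosD2pi R) n 0; have := periodicn (@sinD2pi R) n 0.
by rewrite !add0r cos0 sin0 E => -> ->.
Qed.

Lemma cs_int (n : int) : cos (2 * pi * n%:~R) = 1 :> R /\ sin (2 * pi * n%:~R) = 0 :> R.
Proof.
case: n => m; first exact: cs_nat.
by rewrite NegzE mulrNz mulrN cosN sinN (cs_nat m.+1).1 (cs_nat m.+1).2 oppr0.
Qed.

Lemma cos_eq1_int (t : R) : cos (2 * pi * t) = 1 -> exists n : int, t = n%:~R.
Proof.
move=> h; exists (Num.floor t); set n := Num.floor t.
have s0 : 0 <= t - n%:~R by rewrite subr_ge0 floor_le.
have s1 : t - n%:~R < 1 by rewrite ltrBlDr -[1]/(1%:~R) -intrD addrC floorD1_gt.
have cs : cos (2 * pi * (t - n%:~R)) = 1.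
  by rewrite mulrBr cosB h (cs_int n).1 (cs_int n).2 mulr1 mulr0 addr0.
suff : t - n%:~R = 0 by move/eqP; rewrite subr_eq0 => /eqP.
have pi0 := @pi_gt0 R.
have p2 : 0 < 2 * pi :> R by rewrite mulr_gt0.
case: (leP (2 * pi * (t - n%:~R)) pi) => hs.
- have : 2 * pi * (t - n%:~R) = 0.
    apply: cos_inj; rewrite ?cs ?cos0 // in_itv /= ?hs ?mulr_ge0 ?(ltW pi0) //.
    by rewrite lexx.
  by move/eqP; rewrite mulf_eq0 (gt_eqF p2) /= => /eqP.
- have : 2 * pi - 2 * pi * (t - n%:~R) = 0.
    apply: cos_inj; last first.
      have := (cs_nat 1).1; have := (cs_nat 1).2; rewrite !mulr1 => s2 c2.
      by rewrite cosB cos0 cs s2 c2 mul0r addr0 mulr1.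
      by rewrite in_itv /= lexx (ltW pi0).
    rewrite in_itv /=; apply/andP; split.
      by rewrite subr_ge0 ler_piMr ?ltW.
    by move: hs; set a := 2 * pi * _; lra.
  move/eqP; rewrite subr_eq0 -{1}[2 * pi]mulr1 => /eqP /(mulfI (lt0r_neq0 p2)) E.
  by rewrite -E ltxx in s1.
Qed.

Lemma arg_exists (a b : R) : a ^+ 2 + b ^+ 2 = 1 -> exists c, cos c = a /\ sin c = b.
Proof.
move=> h; have ha : -1 <= a <= 1 by apply/andP; split; nra.
have c : cos (acos a) = a by apply: acosK; rewrite in_itv.
have sq : sin (acos a) = `|b|.
  by rewrite sin_acos // (_ : 1 - a ^+ 2 = b ^+ 2) ?sqrtr_sqr //; lra.
case: (lerP 0 b) => hb.
  by exists (acos a); rewrite c sq ger0_norm.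
by exists (- acos a); rewrite cosN sinN c sq ltr0_norm // opprK.
Qed.

Lemma asin0' : asin (0 : R) = 0.
Proof.
have := @sinK R 0; rewrite sin0 => -> //; rewrite in_itv /=.
have := @pi_gt0 R => p0; rewrite oppr_le0 (ltW (divr_gt0 p0 _)) //; apply: divr_ge0 => //; exact: ltW.
Qed.
End S.
Arguments cs_int {R}. Arguments cs_nat {R}. Arguments cos_eq1_int {R}. Arguments arg_exists {R}.

Section Top.
Variable R : realType.
Variable X : pseudoPMetricType R.
Variable T : X -> X.

Lemma iter_inv (p : X -> R) : (forall x, p (T x) = p x) ->
  forall n x, p (iter n T x) = p x.
Proof. by move=> h; elim=> // n IH x; rewrite iterS h IH. Qed.

Lemma inv_const (p : X -> R) : (forall x, closure (Defs.orbit T x) = setT) ->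
  continuous p -> (forall x, p (T x) = p x) -> forall x y, p y = p x.
Proof.
move=> hmin pc h x y.
have cl : closed (p @^-1` [set p x]).
  by apply: preimage_closed => [z _|]; [exact: pc | exact: closed_eq].
suff : (p @^-1` [set p x]) y by [].
rewrite (closure_id (p @^-1` [set p x])).1 //; apply: (@closureS _ (Defs.orbit T x)).
  by move=> z [n [->|->]] /=; rewrite iter_inv.
by rewrite hmin.
Qed.

Lemma cM (k : R) {F : X -> R} {x} : {for x, continuous F} -> {for x, continuous (fun y => k * F y)}.
Proof. by move=> h; apply: (@continuousM R X (fun=> k) F x) => //; exact: cst_continuous. Qed.
Lemma cD {f g : X -> R} {x} : {for x, continuous f} -> {for x, continuous g} ->
  {for x, continuous (fun y => f y + g y)}.
Proof. exact: continuousD. Qed.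
Lemma cB {f g : X -> R} {x} : {for x, continuous f} -> {for x, continuous g} ->
  {for x, continuous (fun y => f y - g y)}.
Proof. exact: continuousB. Qed.
Lemma cMr (k : R) {F : X -> R} {x} : {for x, continuous F} -> {for x, continuous (fun y => F y * k)}.
Proof. by move=> h; apply: (@continuousM R X F (fun=> k) x) => //; exact: cst_continuous. Qed.
Lemma ccos {F : X -> R} {x} : {for x, continuous F} -> {for x, continuous (fun y => cos (F y))}.
Proof. by move=> h; apply: (continuous_comp h); exact: continuous_cos. Qed.
Lemma csin {F : X -> R} {x} : {for x, continuous F} -> {for x, continuous (fun y => sin (F y))}.
Proof. by move=> h; apply: (continuous_comp h); exact: continuous_sin. Qed.

Lemma int_cob (g : X -> int) (F : X -> R) : (forall x, closure (Defs.orbit T x) = setT) ->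
  continuous F -> (forall x, (g x)%:~R = F x - F (T x)) ->
  exists h : X -> int, cont_int h /\ forall x, g x = h x - h (T x).
Proof.
move=> hmin Fc hg.
have FT x : F (T x) = F x - (g x)%:~R by rewrite hg; lra.
have pinv : forall x, cos (2 * pi * F (T x)) = cos (2 * pi * F x).
  by move=> x; rewrite FT mulrBr cosB (cs_int (g x)).1 (cs_int (g x)).2 mulr1 mulr0 addr0.
have qinv : forall x, sin (2 * pi * F (T x)) = sin (2 * pi * F x).
  by move=> x; rewrite FT mulrBr sinB (cs_int (g x)).1 (cs_int (g x)).2 mulr1 mulr0 subr0.
pose x0 := (@point X).
have pc := inv_const _ hmin (fun x => ccos (cM (2 * pi) (Fc x))) pinv x0.
have qc := inv_const _ hmin (fun x => csin (cM (2 * pi) (Fc x))) qinv x0.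
have ex x : exists n : int, F x - F x0 = n%:~R.
  apply: cos_eq1_int; rewrite mulrBr cosB pc qc.
  by rewrite -!expr2 cos2Dsin2.
pose h x := Num.floor (F x - F x0).
have hE x : (h x)%:~R = F x - F x0.
  by rewrite /h; have [n ->] := ex x; rewrite intrKfloor.
exists h; split.
  rewrite /cont_int (_ : (fun x => _) = (fun x => F x - F x0)); last first.
    by apply: funext => x; rewrite hE.
  by move=> x; apply: continuousB; [exact: Fc | exact: cst_continuous].
move=> x; apply: (@intr_inj R).
by rewrite intrB !hE hg; lra.
Qed.

Lemma const_cob (c : R) (G : X -> R) : compact [set: X] -> continuous G ->
  (forall x, c = G x - G (T x)) -> c = 0.
Proof.
move=> cmp Gc hc.
have it n x : G (iter n T x) = G x - n%:R * c.
  elim: n => [|n IH]; first by rewrite /= mul0r subr0.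
  by rewrite iterS; move: (hc (iter n T x)); rewrite IH mulrSr; lra.
have cG : compact (G @` [set: X]).
  by apply: continuous_compact => //; apply: continuous_subspaceT.
case: (compact_bounded cG) => M [Mr HM].
have hb y : `|G y| <= M + 1.
  by apply: (HM (M + 1)); [rewrite ltrDl | exists y].
apply/eqP; apply: contraT => c0.
have cp : 0 < `|c| by rewrite normr_gt0.
pose x0 := (@point X).
set n := (Num.truncn ((2 * (M + 1)) / `|c|)).+1.
have hn : (2 * (M + 1)) / `|c| < n%:R by exact: truncnS_gt.
move: hn; rewrite ltr_pdivrMr // => hn.
have : `|n%:R * c| <= 2 * (M + 1).
  have -> : n%:R * c = G x0 - G (iter n T x0) by rewrite it; lra.
  by apply: (le_trans (ler_normB _ _)); have := hb x0; have := hb (iter n T x0); lra.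
by rewrite normrM normr_nat; lra.
Qed.

Lemma cont_near (f g : X -> R) x : nbhs x [set y | f y = g y] ->
  {for x, continuous g} -> {for x, continuous f}.
Proof.
move=> hn gc.
have fx : f x = g x by exact: (nbhs_singleton hn).
rewrite /prop_for /continuous_at fx.
apply: cvg_trans gc; apply: near_eq_cvg.
by apply: filterS hn => y /= ->.
Qed.

Definition Good (P : X -> R -> Prop) (S : set X) :=
  exists g : X -> R, forall x, S x -> {for x, continuous g} /\ P x (g x).

Lemma Good_sub P S S' : S' `<=` S -> Good P S -> Good P S'.
Proof. by move=> h [g hg]; exists g => x /h /hg. Qed.

Lemma Good0 P : Good P set0.
Proof. by exists (fun=> 0) => x []. Qed.

Lemma Good_glue P A B : clopen A -> Good P A -> Good P B -> Good P (A `|` B).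
Proof.
move=> [oA cA] [gA hA] [gB hB].
exists (fun x => if pselect (A x) is left _ then gA x else gB x) => x ABx.
case: (pselect (A x)) => Ax.
  split; last by have [] := hA x Ax.
  apply: (@cont_near _ gA); last by have [] := hA x Ax.
  apply: filterS (open_nbhs_nbhs (conj oA Ax)) => y Ay /=.
  by case: pselect.
have Bx : B x by case: ABx.
split; last by have [] := hB x Bx.
apply: (@cont_near _ gB); last by have [] := hB x Bx.
have oC : open (~` A) by rewrite openC.
apply: filterS (open_nbhs_nbhs (conj oC Ax)) => y Ay /=.
by case: pselect.
Qed.

Lemma Good_list P (I : eqType) (D : I -> set X) (s : seq I) :
  (forall i, clopen (D i) /\ Good P (D i)) ->
  Good P [set x | exists2 i, i \in s & D i x].
Proof.
move=> hD; elim: s => [|a s IH].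
  by apply: (@Good_sub _ set0); [move=> x [] | exact: Good0].
apply: (@Good_sub _ (D a `|` [set x | exists2 i, i \in s & D i x])).
  move=> x [i]; rewrite inE => /orP [/eqP <-|ins] Dx; first by left.
  by right; exists i.
by apply: Good_glue; [exact: (hD a).1 | exact: (hD a).2 | exact: IH].
Qed.

Definition Parg (fr fi : X -> R) (eps : R) (x : X) (v : R) :=
  cos (2 * pi * v) = fr x /\ sin (2 * pi * v) = fi x /\ -eps < v < 1 + eps.

Lemma local_good (fr fi : X -> R) (eps : R) (x0 : X) :
  cantor_like X -> 0 < eps -> continuous fr -> continuous fi ->
  (forall x, fr x ^+ 2 + fi x ^+ 2 = 1) ->
  exists D, [/\ D x0, clopen D & Good (Parg fr fi eps) D].
Proof.
move=> [_ cmp hsd zd] e0 frc fic h1.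
have p0 := @pi_gt0 R.
have p2 : 0 < 2 * pi :> R by rewrite mulr_gt0.
have [c' [hc1 hc2]] := arg_exists _ _ (h1 x0).
set ca := fr x0; set sa := fi x0.
set c1 := c' / (2 * pi) - (Num.floor (c' / (2 * pi)))%:~R.
have c1E : 2 * pi * c1 = c' - 2 * pi * (Num.floor (c' / (2 * pi)))%:~R.
  by rewrite /c1 mulrBr mulrCA divff ?mulr1 // lt0r_neq0.
have cc1 : cos (2 * pi * c1) = ca.
  by rewrite c1E cosB (cs_int _).1 (cs_int _).2 mulr1 mulr0 addr0.
have sc1 : sin (2 * pi * c1) = sa.
  by rewrite c1E sinB (cs_int _).1 (cs_int _).2 mulr1 mulr0 subr0.
have c10 : 0 <= c1 by rewrite /c1 subr_ge0 floor_le.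
have c11 : c1 < 1 by rewrite /c1 ltrBlDr -[1]/(1%:~R) -intrD addrC floorD1_gt.
pose wr y := fr y * ca + fi y * sa.
pose wi y := fi y * ca - fr y * sa.
have w1 y : wr y ^+ 2 + wi y ^+ 2 = 1.
  transitivity ((fr y ^+ 2 + fi y ^+ 2) * (ca ^+ 2 + sa ^+ 2)).
    by rewrite /wr /wi; ring.
  by rewrite h1 /ca /sa h1 mulr1.
have wrc : continuous wr.
  by move=> y; apply: cD; apply: cMr; by [apply: frc | apply: fic].
have wic : continuous wi.
  by move=> y; apply: cB; apply: cMr; by [apply: frc | apply: fic].
pose al y := asin (wi y).
pose g y := c1 + (2 * pi)^-1 * al y.
have wix0 : wi x0 = 0 by rewrite /wi /ca /sa mulrC subrr.
have wrx0 : wr x0 = 1 by rewrite /wr /ca /sa -!expr2 h1.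
have alc y : -1 < wi y < 1 -> {for y, continuous al}.
  by move=> hy; apply: (continuous_comp (wic y)); exact: continuous_asin.
pose V := [set y | 0 < wr y /\ -(pi * eps) < al y /\ al y < pi * eps].
have GV : Good (Parg fr fi eps) V.
  exists g => y [wrp [alp alq]].
  have wib : -1 < wi y < 1 by apply/andP; split; have := w1 y; nra.
  split.
    move=> /=; apply: cD; first exact: cst_continuous.
    by apply: cM; apply: alc.
  have gE : 2 * pi * g y = 2 * pi * c1 + al y.
    by rewrite /g mulrDr mulrA divff ?mul1r // lt0r_neq0.
  have wib' : -1 <= wi y <= 1 by move: wib => /andP[? ?]; apply/andP; split; apply: ltW.
  have cal : cos (al y) = wr y.
    rewrite /al cos_asin // (_ : 1 - wi y ^+ 2 = wr y ^+ 2) ?sqrtr_sqr ?gtr0_norm //.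
    by have := w1 y; lra.
  have sal : sin (al y) = wi y by rewrite /al asinK // in_itv.
  split; [|split].
  - rewrite gE cosD cc1 sc1 cal sal.
    transitivity (fr y * (ca ^+ 2 + sa ^+ 2)); first by rewrite /wr /wi; ring.
    by rewrite /ca /sa h1 mulr1.
  - rewrite gE sinD cc1 sc1 cal sal.
    transitivity (fi y * (ca ^+ 2 + sa ^+ 2)); first by rewrite /wr /wi; ring.
    by rewrite /ca /sa h1 mulr1.
  - have kp : 0 < (2 * pi)^-1 :> R by rewrite invr_gt0.
    have hk : (2 * pi)^-1 * (pi * eps) = eps / 2.
      by rewrite invfM -mulrA (mulrA pi^-1) mulVf ?mul1r ?(lt0r_neq0 p0) // mulrC.
    have l1 : (2 * pi)^-1 * al y < eps / 2 by rewrite -hk ltr_pM2l.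
    have l2 : (2 * pi)^-1 * -(pi * eps) < (2 * pi)^-1 * al y by rewrite ltr_pM2l.
    move: l2; rewrite mulrN hk => l2.
    by rewrite /g; apply/andP; split; lra.
have nV : nbhs x0 V.
  have n1 : nbhs x0 [set y | 0 < wr y].
    have : nbhs (wr x0) [set z : R | 0 < z].
      by apply: open_nbhs_nbhs; split; [exact: open_gt | rewrite /= wrx0].
    by move/(wrc x0).
  have alx0 : al x0 = 0 by rewrite /al wix0 asin0'.
  have alx : {for x0, continuous al} by apply: alc; rewrite wix0; apply/andP; split; lra.
  have pe : 0 < pi * eps by rewrite mulr_gt0.
  have n2 : nbhs x0 [set y | -(pi * eps) < al y].
    have : nbhs (al x0) [set z : R | -(pi * eps) < z].
      by apply: open_nbhs_nbhs; split; [exact: open_gt | rewrite /= alx0 oppr_lt0].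
    by move/alx.
  have n3 : nbhs x0 [set y | al y < pi * eps].
    have : nbhs (al x0) [set z : R | z < pi * eps].
      by apply: open_nbhs_nbhs; split; [exact: open_lt | rewrite /= alx0].
    by move/alx.
  by apply: filterS (filterI n1 (filterI n2 n3)) => y [? [? ?]].
have := zero_dimensional_cvg hsd zd cmp (x := x0).
move=> /(_ V nV) [D [Dx0 Dcl] DV].
by exists D; split => //; exact: Good_sub GV.
Qed.

Lemma exists_U (th : R) (fr fi : X -> R) : cantor_like X -> continuous T ->
  0 < th < 1 -> continuous fr -> continuous fi ->
  (forall x, fr x ^+ 2 + fi x ^+ 2 = 1) ->
  (forall x, fr (T x) = cos (2 * pi * th) * fr x - sin (2 * pi * th) * fi x
         /\ fi (T x) = sin (2 * pi * th) * fr x + cos (2 * pi * th) * fi x) ->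
  exists U, admissible T th U.
Proof.
move=> cl Tc /andP[t0 t1] frc fic h1 heig.
set eps := th * (1 - th) / 2.
have e0 : 0 < eps by rewrite /eps divr_gt0 // mulr_gt0 // subr_gt0.
have e1 : eps * 2 <= th by rewrite /eps mulfVK //; nra.
have e2 : eps * 2 <= 1 - th by rewrite /eps mulfVK //; nra.
have loc x0 := @local_good fr fi eps x0 cl e0 frc fic h1.
have [Dm hDm] := choice loc.
have cmp : compact [set: X] by case: cl.
rewrite compact_cover in cmp.
have [D' _ cov] : finite_subset_cover [set: X] Dm [set: X].
  apply: cmp.
    by move=> i _; have [_ [] ] := hDm i.
  by move=> x _; exists x => //; have [] := hDm x.
have GT : Good (Parg fr fi eps) [set: X].
  have := @Good_list (Parg fr fi eps) X Dm (finmap.enum_fset D') (fun i => match hDm i with And3 _ a b => conj a b end).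
  apply: Good_sub.
  by move=> x /cov [i Di Dix]; exists i.
have [phi hphi] := GT.
have pc : continuous phi by move=> x; have [] := hphi x I.
pose v x := th + phi x - phi (T x).
have vc : continuous v.
  move=> x; apply: cB; first by apply: cD; [exact: cst_continuous | exact: pc].
  exact: (continuous_comp (Tc x) (pc (T x))).
have vint x : exists n : int, v x = n%:~R.
  apply: cos_eq1_int.
  have [c1 [s1 _]] := (hphi x I).2.
  have [c2 [s2 _]] := (hphi (T x) I).2.
  have [eT1 eT2] := heig x.
  have cA : cos (2 * pi * (th + phi x)) = cos (2 * pi * phi (T x)).
    by rewrite mulrDr cosD c1 s1 c2 eT1.
  have sA : sin (2 * pi * (th + phi x)) = sin (2 * pi * phi (T x)).
    by rewrite mulrDr sinD c1 s1 s2 eT2.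
  by rewrite /v mulrBr cosB cA sA -!expr2 cos2Dsin2.
have vb x : -1 < v x < 2.
  have [_ [_ /andP [a1 a2]]] := (hphi x I).2.
  have [_ [_ /andP [b1 b2]]] := (hphi (T x) I).2.
  by rewrite /v; apply/andP; split; lra.
have v01 x : v x = 0 \/ v x = 1.
  have [n hn] := vint x; have := vb x; rewrite hn => /andP [n1 n2].
  have n1' : (-1 < n)%R by rewrite -(ltr_int R).
  have n2' : (n < 2)%R by rewrite -(ltr_int R).
  have : (n == 0) || (n == 1) by lia.
  by case/orP => /eqP ->; [left | right].
exists [set x | v x = 1]; split.
  split.
    rewrite (_ : [set x | v x = 1] = v @^-1` [set z : R | 1 / 2 < z]).
      by apply: (continuousP _).1 => //; exact: open_gt.
    apply/seteqP; split => x /=; first by move=> ->; lra.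
    by case: (v01 x) => ->; lra.
  have HH : closed [set z : R | z = 1] by exact: closed_eq.
  exact: (@preimage_closed _ _ v [set z : R | z = 1] (fun x _ => vc x) HH).
exists phi; split => // x.
rewrite indicE; case: (v01 x) => hv.
  rewrite memNset /=; last by rewrite hv; lra.
  by move: hv; rewrite /v; lra.
rewrite mem_set //=.
by move: hv; rewrite /v; lra.
Qed.
End Top.

Lemma indic_int (R : realType) (X : Type) (U : set X) x :
  ((\1_U x : int))%:~R = (\1_U x : R).
Proof. by rewrite !indicE; case: (x \in U). Qed.

Lemma cMM (R : realType) (X : pseudoPMetricType R) (f g : X -> R) x :
  {for x, continuous f} -> {for x, continuous g} ->
  {for x, continuous (fun y => f y * g y)}.
Proof. by move=> hf hg; apply: (@continuousM R X f g x). Qed.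

Arguments cB {R X f g x}. Arguments cD {R X f g x}.

Theorem mainTheorem5 (R : realType) (X : pseudoPMetricType R) (T : X -> X) :
  cantor_minimal T ->
  (forall theta : R, E_set T theta -> 0 <= theta < 1 ->
     exists U : set X, admissible T theta U) /\
  admissible T 0 set0 /\
  (E_set T 0 /\
   forall t1 t2 : R, E_set T t1 -> E_set T t2 ->
     E_set T (t1 + t2) /\ E_set T (- t1)) /\
  (forall (theta : R) (U U' : set X), E_set T theta ->
     admissible T (fracpart theta) U -> admissible T (fracpart theta) U' ->
     K0_eq T (Theta_rep theta U) (Theta_rep theta U')) /\
  (forall (t1 t2 : R) (U1 U2 U12 : set X), E_set T t1 -> E_set T t2 ->
     admissible T (fracpart t1) U1 -> admissible T (fracpart t2) U2 ->
     admissible T (fracpart (t1 + t2)) U12 ->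
     K0_eq T (Theta_rep (t1 + t2) U12)
               (fun x => Theta_rep t1 U1 x + Theta_rep t2 U2 x)) /\
  (forall (t1 t2 : R) (U1 U2 : set X), E_set T t1 -> E_set T t2 ->
     admissible T (fracpart t1) U1 -> admissible T (fracpart t2) U2 ->
     K0_eq T (Theta_rep t1 U1) (Theta_rep t2 U2) -> t1 = t2).
Proof.
move=> [cl [Tinv [_ _ Tc _]] hmin].
have adm0 : admissible T 0 set0.
  split; first exact: clopen0.
  exists (fun=> 0); split; first exact: cst_continuous.
  by move=> x; rewrite indicE memNset // subrr.
split.
  move=> th [fr [fi [frc fic h1 heig]]] /andP [t0 t1].
  have [->|tn0] := eqVneq th 0; first by exists set0.
  apply: (@exists_U R X T th fr fi cl Tc _ frc fic h1 heig).
  by rewrite t1 andbT lt0r tn0.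
split; first exact: adm0.
split.
  split.
    exists (fun=> 1), (fun=> 0); split; try exact: cst_continuous.
      by move=> x; rewrite expr0n /= addr0 expr1n.
    by move=> x; rewrite !mulr0 cos0 sin0; split; ring.
  move=> t1 t2 [fr1 [fi1 [frc1 fic1 h11 he1]]] [fr2 [fi2 [frc2 fic2 h12 he2]]].
  split.
    exists (fun x => fr1 x * fr2 x - fi1 x * fi2 x),
           (fun x => fr1 x * fi2 x + fi1 x * fr2 x); split.
    - by move=> x; apply: (@cB R X (fun y => fr1 y * fr2 y) (fun y => fi1 y * fi2 y)); apply: cMM; by [apply: frc1 | apply: frc2 | apply: fic1 | apply: fic2].
    - by move=> x; apply: (@cD R X (fun y => fr1 y * fi2 y) (fun y => fi1 y * fr2 y)); apply: cMM; by [apply: frc1 | apply: frc2 | apply: fic1 | apply: fic2].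
    - move=> x; transitivity ((fr1 x ^+ 2 + fi1 x ^+ 2) * (fr2 x ^+ 2 + fi2 x ^+ 2)).
        by ring.
      by rewrite h11 h12 mulr1.
    - move=> x; have [a1 b1] := he1 x; have [a2 b2] := he2 x.
      rewrite /= (mulrDr (2 * pi) t1 t2) cosD sinD a1 b1 a2 b2; split; ring.
  exists fr1, (fun x => - fi1 x); split.
  - exact: frc1.
  - by move=> x; apply: continuousN; apply: fic1.
  - by move=> x; rewrite sqrrN.
  - move=> x; have [a1 b1] := he1 x.
    rewrite mulrN cosN sinN a1 b1; split; ring.
split.
  move=> th U U' _ [_ [F [Fc hF]]] [_ [F' [Fc' hF']]].
  have Hg : forall x, ((Theta_rep th U x - Theta_rep th U' x)%:~R : R)
      = (F x - F' x) - (F (T x) - F' (T x)).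
    move=> x; rewrite /Theta_rep intrB !intrD !indic_int.
    by have := hF x; have := hF' x; lra.
  have [h [hc hh]] := @int_cob R X T _ (fun x => F x - F' x) hmin
    (fun x => cB (Fc x) (Fc' x)) Hg.
  by exists h; split.
split.
  move=> t1 t2 U1 U2 U12 _ _ [_ [F1 [Fc1 hF1]]] [_ [F2 [Fc2 hF2]]] [_ [F3 [Fc3 hF3]]].
  have Hg : forall x, ((Theta_rep (t1 + t2) U12 x - (Theta_rep t1 U1 x + Theta_rep t2 U2 x))%:~R : R)
      = (F3 x - F1 x - F2 x) - (F3 (T x) - F1 (T x) - F2 (T x)).
    move=> x; rewrite /Theta_rep intrB !intrD !indic_int.
    by have := hF1 x; have := hF2 x; have := hF3 x; rewrite /fracpart; lra.
  have [h [hc hh]] := @int_cob R X T _ (fun x => F3 x - F1 x - F2 x) hmin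
     (fun x => cB (cB (Fc3 x) (Fc1 x)) (Fc2 x)) Hg.
  by exists h; split.
move=> t1 t2 U1 U2 _ _ [_ [F1 [Fc1 hF1]]] [_ [F2 [Fc2 hF2]]] [h [hc hh]].
apply/eqP; rewrite -subr_eq0; apply/eqP.
have cmp : compact [set: X] by case: cl.
apply: (@const_cob R X T _ (fun x => (h x)%:~R - F1 x + F2 x) cmp).
  move=> x; apply: (@cD R X (fun y => (h y)%:~R - F1 y) F2); last exact: Fc2.
  apply: (@cB R X (fun y => (h y)%:~R) F1); [exact: hc | exact: Fc1].
move=> x; have := congr1 (fun z : int => (z%:~R : R)) (hh x).
rewrite /Theta_rep /= !intrB !intrD !indic_int.
have := hF1 x; have := hF2 x; rewrite /fracpart; lra.
Qed.
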